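(* Let $A$ be an algebra, $R$ a Rota–Baxter operator of weight zero on $A$, and $e$ a nonzero idempotent of $A$. Then $e\notin \mathrm{Im}(R^k)\cap\ker R$ for every $k\ge2$.
   Context: An algebra is a vector space with a bilinear (not necessarily associative) product. A linear operator $R$ on $A$ is a Rota–Baxter operator of weight $0$ if $R(x)R(y)=R(R(x)y+xR(y))$ for all $x,y\in A$. *)

(* Defs.v *)
From HB Require Import structures.
From mathcomp Require Import all_boot all_order all_algebra.
Set Implicit Arguments. Unset Strict Implicit. Unset Printing Implicit Defensive.
Import GRing.Theory.
Local Open Scope ring_scope.

(* A (not necessarily associative) algebra structure on a vector space V over
   a field F is given by a bilinear product [mul : V -> V -> V]. *)
Definition bilinear_prod (F : fieldType) (V : lmodType F) (mul : V -> V -> V) : Prop :=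
  (forall a x y z, mul (a *: x + y) z = a *: mul x z + mul y z) /\
  (forall a x y z, mul x (a *: y + z) = a *: mul x y + mul x z).

Definition rota_baxter0 (F : fieldType) (V : lmodType F) (mul : V -> V -> V)
  (R : V -> V) : Prop :=
  forall x y, mul (R x) (R y) = R (mul (R x) y + mul x (R y)).

Definition in_image_iter (V : Type) (R : V -> V) (k : nat) (v : V) : Prop :=
  exists x, iter k R x = v.

(* Main.v *)
Require Import Defs.
From HB Require Import structures.
From mathcomp Require Import all_boot all_order all_algebra.
Import GRing.Theory.
Local Open Scope ring_scope.

Theorem lemma13 (F : fieldType) (V : lmodType F) (mul : V -> V -> V)
  (R : {linear V -> V}) (e : V) (k : nat) :
  bilinear_prod mul -> rota_baxter0 mul R ->
  mul e e = e -> e != 0 -> (2 <= k)%N ->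
  ~ (in_image_iter R k e /\ R e = 0).
Proof.
move=> [bl br] RB ee ne0 hk [[x hx] Re0].
have m0l w : mul 0 w = 0.
  have := bl 1 0 0 w; rewrite !scale1r !addr0 => /(congr1 (fun t => t - mul 0 w)).
  by rewrite subrr addrK => /esym.
have m0r w : mul w 0 = 0.
  have := br 1 w 0 0; rewrite !scale1r !addr0 => /(congr1 (fun t => t - mul w 0)).
  by rewrite subrr addrK => /esym.
case: k hk hx => [|[|k]] // _ /= hx.
set z := iter k R x in hx.
have h1 : R (mul e (R z)) = 0.
  by have := RB e z; rewrite Re0 !m0l add0r.
have h2 : R (mul (R z) e) = 0.
  by have := RB z e; rewrite Re0 !m0r addr0.
move/eqP: ne0; apply.
by rewrite -ee -{1 2}hx RB hx linearD h1 h2 addr0.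
Qed.
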